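(* The $\mathbb{R}$-linear map $$\Theta:\mathbb{R}\otimes_{\mathbb{Z}}\mathcal{H}(\mathcal{Z}_{\mathbb{R}_+})\to\mathbb{R},\quad \begin{bmatrix} s_1,\dots,s_k\\ b_1,\dots,b_k\end{bmatrix}\mapsto f\begin{pmatrix} s_1,\dots,s_k\\ b_1,\dots,b_k\end{pmatrix},\quad 1\mapsto1,$$ is a homomorphism of $\mathbb{R}$-algebras, where the source carries the ($\mathbb{R}$-linear extension of the) product $\diamond$.
   Context: $f\begin{pmatrix} s_1,\dots,s_k\\ b_1,\dots,b_k\end{pmatrix}=\frac{1}{(b_1+\cdots+b_k)^{s_1}(b_2+\cdots+b_k)^{s_2}\cdots b_k^{s_k}}$ for positive integers $s_i$ and positive reals $b_i$. Let $\mathcal{Z}_{\mathbb{R}_+}=\{\begin{bmatrix} r\\ b\end{bmatrix}: r\in\mathbb{Z}_{\ge1}, b\in\mathbb{R}_+\}$, $M(\mathcal{Z}_{\mathbb{R}_+})$ the free monoid on these symbols with words written $\begin{bmatrix} s_1,\dots,s_k\\ b_1,\dots,b_k\end{bmatrix}$ (empty word $1$), $\mathcal{H}(\mathcal{Z}_{\mathbb{R}_+})=\mathbb{Z}M(\mathcal{Z}_{\mathbb{R}_+})$. Let $X=\{x_0\}\sqcup\{x_b:b\in\mathbb{R}_+\}$ and on $\mathbb{Z}M(X)$ let $ш$ be the shuffle product: $1шw=w=wш1$, $(aw')ш(bw'')=a(w'шbw'')+b(aw'шw'')$ for letters $a,b\in X$. Let $\rho$ be the linear bijection from $\mathbb{Z}\oplus\bigoplus_{b}\mathbb{Z}M(X)x_b$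 onto $\mathcal{H}(\mathcal{Z}_{\mathbb{R}_+})$ given by $x_0^{r_1-1}x_{b_1}\cdots x_0^{r_k-1}x_{b_k}\mapsto\begin{bmatrix} r_1,\dots,r_k\\ b_1,\dots,b_k\end{bmatrix}$, $1\mapsto1$, and define $\alpha\diamond\beta=\rho(\rho^{-1}(\alpha)ш\rho^{-1}(\beta))$. *)

(* Defs.v *)
From Stdlib Require Import Reals List.
Import ListNotations.
Open Scope R_scope.

(* Alphabet X = {x_0} ⊔ {x_b : b ∈ R_+}.  (Positivity of b is imposed as a
   hypothesis on the words we consider.) *)
Inductive letterX : Type :=
| x0 : letterX
| xb : R -> letterX.

Definition wordX := list letterX.

(* Shuffle product of two words, as the (multi)list of words appearing in the
   Z-linear combination (each with coefficient 1, repetitions counted):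
   1 ш w = w = w ш 1,  (a w') ш (b w'') = a (w' ш b w'') + b (a w' ш w''). *)
Fixpoint shuffle (u : wordX) : wordX -> list wordX :=
  match u with
  | [] => fun v => [v]
  | a :: u' =>
      fix shuf_v (v : wordX) : list wordX :=
        match v with
        | [] => [u]
        | b :: v' =>
            map (cons a) (shuffle u' v) ++ map (cons b) (shuf_v v')
        end
  end.

(* A word of M(Z_{R_+}): [s_1..s_k ; b_1..b_k] as the list of pairs (s_i, b_i). *)
Definition wordZ := list (nat * R).

Definition valid_wordZ (w : wordZ) : Prop :=
  Forall (fun p => (1 <= fst p)%nat /\ 0 < snd p) w.

Fixpoint rho_inv (w : wordZ) : wordX :=
  match w with
  | [] => []
  | (r, b) :: w' => repeat x0 (r - 1) ++ xb b :: rho_inv w'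
  end.

(* rho: x0^{r_1-1} x_{b_1} ... x0^{r_k-1} x_{b_k} |-> [r_1..r_k ; b_1..b_k].
   (Only applied to words that are empty or end in some x_b; trailing x0's,
   which never occur in that domain, are discarded.) *)
Fixpoint rho_aux (cnt : nat) (w : wordX) : wordZ :=
  match w with
  | [] => []
  | x0 :: w' => rho_aux (S cnt) w'
  | xb b :: w' => (S cnt, b) :: rho_aux O w'
  end.
Definition rho (w : wordX) : wordZ := rho_aux O w.

(* Elements of R ⊗_Z H(Z_{R_+}): finite formal R-linear combinations of words,
   represented as lists of (coefficient, word). *)
Definition HR := list (R * wordZ).

Definition valid_HR (a : HR) : Prop := Forall (fun p => valid_wordZ (snd p)) a.

Definition HR_one : HR := [(1, [])].

Definition diamond_word (w1 w2 : wordZ) : list wordZ :=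
  map rho (shuffle (rho_inv w1) (rho_inv w2)).

Definition diamond (a b : HR) : HR :=
  flat_map (fun p1 =>
    flat_map (fun p2 =>
      map (fun w => (fst p1 * fst p2, w)) (diamond_word (snd p1) (snd p2)))
      b) a.

Fixpoint sumb (w : wordZ) : R :=
  match w with
  | [] => 0
  | (_, b) :: w' => b + sumb w'
  end.

Fixpoint fZ (w : wordZ) : R :=
  match w with
  | [] => 1
  | (s, b) :: w' => / (sumb w ^ s) * fZ w'
  end.

Definition Theta (a : HR) : R :=
  fold_right (fun p acc => fst p * fZ (snd p) + acc) 0 a.

(* Main.v *)
Require Import Defs.
From Stdlib Require Import Reals List Lra Lia.
Import ListNotations.
Open Scope R_scope.

Definition lx (a : letterX) : R := match a with x0 => 0 | xb b => b end.
Fixpoint Sx (w : wordX) : R :=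
  match w with [] => 0 | a :: w' => lx a + Sx w' end.
Fixpoint Fx (w : wordX) : R :=
  match w with [] => 1 | a :: w' => / Sx (a :: w') * Fx w' end.
Fixpoint Wx (w : wordX) : Prop :=
  match w with [] => True | a :: w' => Wx w' /\ 0 < Sx (a :: w') end.
Definition sumF (l : list wordX) : R := fold_right (fun w acc => Fx w + acc) 0 l.
Definition sumZ (l : list wordZ) : R := fold_right (fun w acc => fZ w + acc) 0 l.

Lemma shuffle_nil_l v : shuffle [] v = [v].
Proof. reflexivity. Qed.
Lemma shuffle_nil_r u : shuffle u [] = [u].
Proof. destruct u; reflexivity. Qed.
Lemma shuffle_cc a u b v : shuffle (a :: u) (b :: v) =
  map (cons a) (shuffle u (b :: v)) ++ map (cons b) (shuffle (a :: u) v).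
Proof. reflexivity. Qed.

Lemma Wx_nonneg w : Wx w -> 0 <= Sx w.
Proof. destruct w; simpl; intros; [lra|]. destruct H. simpl in H0. lra. Qed.

Lemma shuffle_props u v : Wx u -> Wx v ->
  Forall (fun w => Wx w /\ Sx w = Sx u + Sx v) (shuffle u v).
Proof.
  revert v; induction u as [|a u IHu]; intros v Hu Hv.
  - rewrite shuffle_nil_l. constructor; [split; [auto|simpl; ring]|constructor].
  - induction v as [|b v IHv].
    + rewrite shuffle_nil_r. constructor; [split; [auto|simpl; ring]|constructor].
    + rewrite shuffle_cc. apply Forall_app; split; apply Forall_map.
      * destruct Hu as [Hu HA].
        specialize (IHu (b :: v) Hu Hv).
        pose proof (Wx_nonneg _ Hv).
        eapply Forall_impl; [|exact IHu]. intros w [Hw Hs].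
        simpl in *. split; [split; [auto|]|]; lra.
      * destruct Hv as [Hv HB].
        specialize (IHv Hv).
        pose proof (Wx_nonneg _ Hu).
        eapply Forall_impl; [|exact IHv]. intros w [Hw Hs].
        simpl in *. split; [split; [auto|]|]; lra.
Qed.

Lemma sumF_app l1 l2 : sumF (l1 ++ l2) = sumF l1 + sumF l2.
Proof. induction l1; simpl; [ring|]. unfold sumF in *; simpl; rewrite IHl1; ring. Qed.

Lemma sumF_map_cons a s l : Forall (fun w => Sx w = s) l ->
  sumF (map (cons a) l) = / (lx a + s) * sumF l.
Proof.
  induction l; intros H; simpl; [unfold sumF; simpl; ring|].
  apply Forall_inv in H as H0. apply Forall_inv_tail in H.
  unfold sumF in *; simpl. rewrite IHl by auto.
  simpl. rewrite H0. ring.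
Qed.

Lemma shuffle_sum u v : Wx u -> Wx v -> sumF (shuffle u v) = Fx u * Fx v.
Proof.
  revert v; induction u as [|a u IHu]; intros v Hu Hv.
  - rewrite shuffle_nil_l. unfold sumF; simpl. ring.
  - induction v as [|b v IHv].
    + rewrite shuffle_nil_r. unfold sumF; simpl. ring.
    + rewrite shuffle_cc, sumF_app.
      pose proof (shuffle_props u (b :: v) (proj1 Hu) Hv) as P1.
      pose proof (shuffle_props (a :: u) v Hu (proj1 Hv)) as P2.
      rewrite (sumF_map_cons a (Sx u + Sx (b :: v))).
      2:{ eapply Forall_impl; [|exact P1]. intros w [_ H]; exact H. }
      rewrite (sumF_map_cons b (Sx (a :: u) + Sx v)).
      2:{ eapply Forall_impl; [|exact P2]. intros w [_ H]; exact H. }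
      rewrite IHu by (destruct Hu; auto).
      rewrite IHv by (destruct Hv; auto).
      destruct Hu as [Hu HA]; destruct Hv as [Hv HB].
      simpl in *.
      replace (lx a + (Sx u + (lx b + Sx v))) with ((lx a + Sx u) + (lx b + Sx v)) by ring.
      replace (lx b + (lx a + Sx u + Sx v)) with ((lx a + Sx u) + (lx b + Sx v)) by ring.
      field. lra.
Qed.

Lemma sumb_rho_aux w cnt : sumb (rho_aux cnt w) = Sx w.
Proof.
  revert cnt; induction w as [|a w IH]; intros cnt; simpl; [reflexivity|].
  destruct a; simpl; rewrite IH; ring.
Qed.

Lemma rho_F w : Wx w -> forall cnt, (cnt = 0%nat \/ w <> []) ->
  fZ (rho_aux cnt w) = Fx w * / (Sx w ^ cnt).
Proof.
  induction w as [|a w IH]; intros Hw cnt Hc.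
  - destruct Hc as [->|H]; [simpl; field|congruence].
  - destruct Hw as [Hw HS]. destruct a as [|b]; simpl in *.
    + assert (w <> []) by (intro; subst; simpl in HS; lra).
      rewrite IH by auto. simpl.
      rewrite Rplus_0_l, Rinv_mult. ring.
    + rewrite IH by auto. rewrite sumb_rho_aux. simpl.
      rewrite Rinv_mult, Rinv_1. ring.
Qed.

Lemma sumZ_map_rho l : Forall Wx l -> sumZ (map rho l) = sumF l.
Proof.
  induction l; intros H; [reflexivity|]. inversion H; subst.
  unfold sumZ, sumF in *; simpl. rewrite IHl by auto.
  unfold rho. rewrite (rho_F a H2 0%nat (or_introl eq_refl)). simpl. field.
Qed.

Lemma rho_aux_rep k cnt b t :
  rho_aux cnt (repeat x0 k ++ xb b :: t) = (S (k + cnt), b) :: rho_aux 0 t.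
Proof.
  revert cnt; induction k; intros cnt; simpl; [reflexivity|].
  rewrite IHk. f_equal. f_equal. lia.
Qed.

Lemma rho_rho_inv w : valid_wordZ w -> rho (rho_inv w) = w.
Proof.
  induction w as [|[r b] w IH]; intros H; [reflexivity|].
  inversion H; subst. simpl in H2. simpl. unfold rho. rewrite rho_aux_rep.
  f_equal; [f_equal; lia|]. apply IH; auto.
Qed.

Lemma Sx_rep k b t : Sx (repeat x0 k ++ xb b :: t) = b + Sx t.
Proof. induction k; simpl; [reflexivity|]. rewrite IHk; ring. Qed.

Lemma Wx_rep k b t : Wx t -> 0 < b -> Wx (repeat x0 k ++ xb b :: t).
Proof.
  intros Ht Hb. pose proof (Wx_nonneg _ Ht).
  induction k; simpl.
  - split; auto; lra.
  - split; auto. rewrite Sx_rep; lra.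
Qed.

Lemma Wx_rho_inv w : valid_wordZ w -> Wx (rho_inv w).
Proof.
  induction w as [|[r b] w IH]; intros H; simpl; [exact I|].
  inversion H; subst. simpl in H2. apply Wx_rep; [apply IH; auto|tauto].
Qed.

Lemma F_rho_inv w : valid_wordZ w -> Fx (rho_inv w) = fZ w.
Proof.
  intros H. rewrite <- (rho_rho_inv w H) at 2. unfold rho.
  rewrite (rho_F _ (Wx_rho_inv w H) 0%nat (or_introl eq_refl)). simpl. field.
Qed.

Lemma sumZ_dw w1 w2 : valid_wordZ w1 -> valid_wordZ w2 ->
  sumZ (diamond_word w1 w2) = fZ w1 * fZ w2.
Proof.
  intros H1 H2. unfold diamond_word.
  pose proof (Wx_rho_inv _ H1). pose proof (Wx_rho_inv _ H2).
  rewrite sumZ_map_rho.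
  - rewrite shuffle_sum by auto. rewrite !F_rho_inv by auto. reflexivity.
  - eapply Forall_impl; [|exact (shuffle_props _ _ H H0)]. intros w [Hw _]; exact Hw.
Qed.

Lemma Theta_app l1 l2 : Theta (l1 ++ l2) = Theta l1 + Theta l2.
Proof. induction l1; simpl; [ring|]. unfold Theta in *; simpl; rewrite IHl1; ring. Qed.

Lemma Theta_map c l : Theta (map (fun w => (c, w)) l) = c * sumZ l.
Proof. induction l; simpl; [unfold Theta, sumZ; simpl; ring|].
  unfold Theta, sumZ in *; simpl; rewrite IHl; ring. Qed.

Theorem corollary2p5 :
  Theta HR_one = 1 /\
  (forall a b : HR, valid_HR a -> valid_HR b ->
     Theta (diamond a b) = Theta a * Theta b).
Proof.
  split.
  - unfold Theta, HR_one; simpl; ring.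
  - intros a b Ha Hb. induction a as [|[c1 w1] a IHa]; [unfold Theta; simpl; ring|].
    inversion Ha; subst. simpl in H1.
    unfold diamond; simpl. rewrite Theta_app. fold (diamond a b).
    rewrite IHa by auto.
    assert (Theta (flat_map (fun p2 => map (fun w => (c1 * fst p2, w))
              (diamond_word w1 (snd p2))) b) = c1 * fZ w1 * Theta b) as ->.
    { clear IHa Ha H2. induction b as [|[c2 w2] b IHb]; [unfold Theta; simpl; ring|].
      inversion Hb; subst. simpl in H2. simpl. rewrite Theta_app, Theta_map, IHb by auto.
      rewrite sumZ_dw by auto. unfold Theta; simpl. ring. }
    unfold Theta; simpl. ring.
Qed.
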